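(* Let $X\in\mathbb{R}^{n\times p}$, $B^*\in\mathbb{R}^{p\times q}$, $\sigma^*>0$, $E\in\mathbb{R}^{n\times q}$ and $Y=XB^*+E$. Let $\lambda>0$, $0<\sigma_{\min}\le\sigma^*/\sqrt2$, and let $\eta>0$ satisfy $\lambda\|B^*\|_{2,1}\le\eta\sigma^*$. Suppose $E$ lies in the event $$\mathcal A_1=\Big\{\frac{\|X^\top E\|_{2,\infty}}{\sqrt{nq}\|E\|_F}\le\frac\lambda2\Big\}\cap\Big\{\frac{\sigma^*}{\sqrt2}<\frac{\|E\|_F}{\sqrt{nq}}<2\sigma^*\Big\}.$$ Let $(\hat B,\hat\sigma)$ be a minimizer over $B\in\mathbb{R}^{p\times q}$, $\sigma\ge\sigma_{\min}$ of $\frac{1}{2nq\sigma}\|Y-XB\|_F^2+\frac\sigma2+\lambda\|B\|_{2,1}$, and $\hat E=Y-X\hat B$. Then $$\tfrac{1}{\sqrt{nq}}\|\hat E\|_F\le(2+\eta)\sigma^*.$$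
   Context: $\|M\|_{2,1}=\sum_j\|M_{j:}\|_2$ and $\|M\|_{2,\infty}=\max_j\|M_{j:}\|_2$ over rows $M_{j:}$; $\|\cdot\|_F$ is the Frobenius norm. *)

(* Defs.v *)
From mathcomp Require Import all_boot all_order all_algebra.
Set Implicit Arguments. Unset Strict Implicit. Unset Printing Implicit Defensive.
Import Order.TTheory GRing.Theory Num.Theory.
Local Open Scope ring_scope.

Definition rownorm (R : rcfType) (m n : nat) (M : 'M[R]_(m, n)) (j : 'I_m) : R :=
  Num.sqrt (\sum_(k < n) M j k ^+ 2).

Definition frob (R : rcfType) (m n : nat) (M : 'M[R]_(m, n)) : R :=
  Num.sqrt (\sum_(i < m) \sum_(k < n) M i k ^+ 2).

Definition norm21 (R : rcfType) (m n : nat) (M : 'M[R]_(m, n)) : R :=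
  \sum_(j < m) rownorm M j.

(* ||M||_{2,oo} = max of row norms (0 for the empty matrix; row norms are >= 0) *)
Definition norm2inf (R : rcfType) (m n : nat) (M : 'M[R]_(m, n)) : R :=
  \big[Num.max/0]_(j < m) rownorm M j.

Definition sqrt_lasso_obj (R : rcfType) (n p q : nat)
  (X : 'M[R]_(n, p)) (Y : 'M[R]_(n, q)) (lam : R) (B : 'M[R]_(p, q)) (sigma : R) : R :=
  frob (Y - X *m B) ^+ 2 / (2 * n%:R * q%:R * sigma) + sigma / 2 + lam * norm21 B.

(* Main.v *)
Require Import Defs.
From mathcomp Require Import all_boot all_order all_algebra.
From mathcomp Require Import ring lra.
Import Order.TTheory GRing.Theory Num.Theory.
Local Open Scope ring_scope.

Lemma amgm_aux (R : rcfType) (a s : R) : 0 < s -> a <= a ^+ 2 / (2 * s) + s / 2.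
Proof.
move=> s0; rewrite -subr_ge0.
have -> : a ^+ 2 / (2 * s) + s / 2 - a = (a - s) ^+ 2 / (2 * s).
  by field; rewrite lt0r_neq0.
by rewrite divr_ge0 ?sqr_ge0 // mulr_ge0 // ltW.
Qed.

Lemma norm21_ge0 (R : rcfType) (m k : nat) (M : 'M[R]_(m, k)) : 0 <= norm21 M.
Proof. by rewrite /norm21 sumr_ge0 // => j _; rewrite /rownorm sqrtr_ge0. Qed.

Theorem lemma5 (R : rcfType) (n p q : nat)
  (X : 'M[R]_(n, p)) (Bstar : 'M[R]_(p, q)) (sigstar : R) (E Y : 'M[R]_(n, q))
  (lam sigmin eta : R) (Bhat : 'M[R]_(p, q)) (sighat : R) :
  0 < sigstar ->
  Y = X *m Bstar + E ->
  0 < lam ->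
  0 < sigmin -> sigmin <= sigstar / Num.sqrt 2 ->
  0 < eta -> lam * norm21 Bstar <= eta * sigstar ->
  (* event A_1 *)
  norm2inf (X^T *m E) / (Num.sqrt (n%:R * q%:R) * frob E) <= lam / 2 ->
  sigstar / Num.sqrt 2 < frob E / Num.sqrt (n%:R * q%:R) ->
  frob E / Num.sqrt (n%:R * q%:R) < 2 * sigstar ->
  (* (Bhat, sighat) minimizes the objective over B and sigma >= sigmin *)
  sigmin <= sighat ->
  (forall (B : 'M[R]_(p, q)) (sigma : R), sigmin <= sigma ->
     sqrt_lasso_obj X Y lam Bhat sighat <= sqrt_lasso_obj X Y lam B sigma) ->
  frob (Y - X *m Bhat) / Num.sqrt (n%:R * q%:R) <= (2 + eta) * sigstar.
Proof.
move=> ss0 hY l0 sm0 smle e0 hB _ hE1 hE2 smh hmin.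
set N := Num.sqrt (n%:R * q%:R) in hE1 hE2 *.
have N0 : N != 0.
  apply/eqP=> N0; move: hE1; rewrite N0 invr0 mulr0.
  by apply/negP; rewrite -leNgt divr_ge0 // ?sqrtr_ge0 // ltW.
have NN : n%:R * q%:R = N ^+ 2 by rewrite sqr_sqrtr // mulr_ge0.
set e := frob E / N in hE1 hE2 *.
have he : frob E = e * N by rewrite /e divfK.
set a := frob (Y - X *m Bhat) / N.
have ha : frob (Y - X *m Bhat) = a * N by rewrite /a divfK.
have sh0 : 0 < sighat by apply: lt_le_trans smh.
have hsm : sigmin <= e by apply: ltW; apply: le_lt_trans hE1.
have e0' : 0 < e by apply: lt_le_trans hsm.
have := hmin Bstar e hsm.
rewrite /sqrt_lasso_obj ha hY.
have -> : X *m Bstar + E - X *m Bstar = E by rewrite addrAC subrr add0r.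
rewrite he.
have -> : 2 * n%:R * q%:R * sighat = 2 * N ^+ 2 * sighat by rewrite -NN; ring.
have -> : 2 * n%:R * q%:R * e = 2 * N ^+ 2 * e by rewrite -NN; ring.
have -> : (a * N) ^+ 2 / (2 * N ^+ 2 * sighat) = a ^+ 2 / (2 * sighat).
  by field; rewrite N0 lt0r_neq0.
have -> : (e * N) ^+ 2 / (2 * N ^+ 2 * e) + e / 2 = e.
  by field; rewrite N0 lt0r_neq0.
move=> H.
have h1 := @amgm_aux R a _ sh0.
have h2 : 0 <= lam * norm21 Bhat by rewrite mulr_ge0 ?norm21_ge0 // ltW.
lra.
Qed.
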